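(* Fix $\alpha\in(0,1)$. Every $\alpha$-power piecewise linear function $g:\mathbb{R}\to\mathbb{R}$ is exactly representable by a width-one leaky-ReLU network: there exist $L\in\mathbb{N}$ and parameters $w_i,b_i\in\mathbb{R}$ such that the corresponding $f_L\in\mathcal{N}_1(L)$ satisfies $g(x)=f_L(x)$ for all $x\in\mathbb{R}$.
   Context: Leaky-ReLU: $\sigma_\alpha(x)=\max(\alpha x,x)$. $\mathcal{N}_1(L)$ is the set of functions $f_L:\mathbb{R}\to\mathbb{R}$ with $f_0(x)=w_0x+b_0$, $f_k(x)=w_k\sigma_\alpha(f_{k-1}(x))+b_k$ ($k=1,\dots,L$), $w_k,b_k\in\mathbb{R}$. A piecewise linear (PL) function is a continuous function $g:\mathbb{R}\to\mathbb{R}$ which is affine on each of finitely many intervals partitioning $\mathbb{R}$ (separated by finitely many breakpoints). A PL function $g$ is called $\alpha$-power PL if there is a constant $c\in\mathbb{R}$ such that the slope of every linear piece of $g$ lies in $\{c\alpha^k: k\in\mathbb{Z}\}$. *)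

(* Defs.v *)
From Stdlib Require Import Reals Lra List.
Open Scope R_scope.

Definition leaky (alpha x : R) : R := Rmax (alpha * x) x.

Fixpoint net (alpha : R) (w b : nat -> R) (k : nat) (x : R) : R :=
  match k with
  | O => w O * x + b O
  | S k' => w k * leaky alpha (net alpha w b k' x) + b k
  end.

Fixpoint strictly_sorted (l : list R) : Prop :=
  match l with
  | nil => True
  | x :: l' => match l' with
               | nil => True
               | y :: _ => x < y /\ strictly_sorted l'
               end
  end.

(* g is piecewise linear with breakpoints t_0 < ... < t_{n-1} and pieces
   indexed 0..n:  piece 0 on (-oo, t_0], piece i on [t_{i-1}, t_i],
   piece n on [t_{n-1}, +oo); piece i has slope (s i) and intercept (c i).
   (For n = 0, g is affine on all of R.)  Since pieces are on closed
   intervals, g is automatically continuous. *)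
Definition PL_with (g : R -> R) (t : list R) (s c : nat -> R) : Prop :=
  strictly_sorted t /\
  forall (i : nat) (x : R), (i <= length t)%nat ->
    (i = O \/ nth (i - 1) t 0 <= x) ->
    (i = length t \/ x <= nth i t 0) ->
    g x = s i * x + c i.

Definition piecewise_linear (g : R -> R) : Prop :=
  exists t s c, PL_with g t s c.

Definition alpha_power_PL (alpha : R) (g : R -> R) : Prop :=
  exists t s c, PL_with g t s c /\
    exists C : R, forall i : nat, (i <= length t)%nat ->
      exists k : Z, s i = C * powerRZ alpha k.

(* Main.v *)
Require Import Defs.
From Stdlib Require Import Reals.
From Stdlib Require Import Lra Lia List ZArith.
Open Scope R_scope.

Section Aux.
Variable alpha : R.

Definition NR (f : R -> R) : Prop :=
  exists L w b, forall x, f x = net alpha w b L x.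

Definition Pre (psi : R -> R) : Prop := forall f, NR f -> NR (fun x => f (psi x)).

Lemma NR_ext f g : NR f -> (forall x, f x = g x) -> NR g.
Proof. intros [L [w [b H]]] E. exists L, w, b. intro x. rewrite <- E. apply H. Qed.

Lemma NR_affine p q : NR (fun x => p * x + q).
Proof. exists O, (fun _ => p), (fun _ => q). intro x. simpl. ring. Qed.

Lemma Pre_affine p q : Pre (fun x => p * x + q).
Proof.
  intros f [L [w [b H]]].
  exists L, (fun k => match k with O => w O * p | _ => w k end),
            (fun k => match k with O => w O * q + b O | _ => b k end).
  intro x. rewrite H. clear H.
  induction L as [|k IH].
  - simpl. ring.
  - simpl net. rewrite IH. reflexivity.
Qed.

Lemma Pre_leaky : Pre (leaky alpha).
Proof.
  intros f [L [w [b H]]].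
  exists (S L), (fun k => match k with O => 1 | S k => w k end),
            (fun k => match k with O => 0 | S k => b k end).
  intro x. rewrite H. clear H.
  induction L as [|k IH].
  - simpl. f_equal. f_equal. f_equal. ring.
  - change (net alpha (fun k0 : nat => match k0 with | 0%nat => 1 | S k1 => w k1 end)
      (fun k0 : nat => match k0 with | 0%nat => 0 | S k1 => b k1 end) (S (S k)) x)
      with (w (S k) * leaky alpha (net alpha (fun k0 : nat => match k0 with | 0%nat => 1 | S k1 => w k1 end)
      (fun k0 : nat => match k0 with | 0%nat => 0 | S k1 => b k1 end) (S k) x) + b (S k)).
    rewrite <- IH. reflexivity.
Qed.

Lemma Pre_ext p1 p2 : Pre p1 -> (forall x, p1 x = p2 x) -> Pre p2.
Proof.
  intros P E f Hf. apply (NR_ext _ _ (P f Hf)). intro x. rewrite E. reflexivity.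
Qed.

Lemma Pre_comp p1 p2 : Pre p1 -> Pre p2 -> Pre (fun x => p1 (p2 x)).
Proof. intros P1 P2 f Hf. apply (P2 (fun y => f (p1 y))). apply P1. exact Hf. Qed.

Lemma Pre_id : Pre (fun x => x).
Proof. intros f Hf. exact Hf. Qed.

Definition bend (r u : R) : R := u + (r - 1) * Rmin u 0.

Lemma bend_pos r u : 0 <= u -> bend r u = u.
Proof. intro H. unfold bend. rewrite Rmin_right by lra. ring. Qed.

Lemma bend_neg r u : u <= 0 -> bend r u = r * u.
Proof. intro H. unfold bend. rewrite Rmin_left by lra. ring. Qed.

Lemma bend_mult r r' u : 0 < r -> 0 < r' -> bend r (bend r' u) = bend (r * r') u.
Proof.
  intros Hr Hr'. destruct (Rle_dec 0 u).
  - rewrite (bend_pos r' u) by lra. rewrite !bend_pos by lra. reflexivity.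
  - rewrite (bend_neg r' u) by lra. rewrite bend_neg.
    + rewrite bend_neg by lra. ring.
    + assert (u < 0) by lra. nra.
Qed.

Hypothesis Ha : 0 < alpha < 1.

Lemma Pre_bend_a : Pre (bend alpha).
Proof.
  apply (Pre_ext _ _ Pre_leaky). intro u. unfold leaky.
  destruct (Rle_dec 0 u).
  - rewrite bend_pos by lra. apply Rmax_right. nra.
  - assert (u < 0) by lra. rewrite bend_neg by lra. apply Rmax_left. nra.
Qed.

Lemma Pre_bend_ia : Pre (bend (/ alpha)).
Proof.
  assert (P : Pre (fun x => (- / alpha) * (leaky alpha ((-1) * x + 0)) + 0)).
  { apply (Pre_comp (fun y => (- / alpha) * y + 0) (fun x => leaky alpha ((-1) * x + 0))).
    - apply Pre_affine.
    - apply (Pre_comp (leaky alpha) (fun x => (-1) * x + 0)).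
      + apply Pre_leaky.
      + apply Pre_affine. }
  apply (Pre_ext _ _ P). intro u. unfold leaky.
  assert (alpha <> 0) by lra.
  destruct (Rle_dec 0 u).
  - rewrite bend_pos by lra. rewrite Rmax_left by nra. field. auto.
  - assert (u < 0) by lra. rewrite bend_neg by lra. rewrite Rmax_right by nra. field. auto.
Qed.

Lemma Pre_bend_pow r n : 0 < r -> Pre (bend r) -> Pre (bend (r ^ n)).
Proof.
  intros Hr P. induction n as [|n IH].
  - simpl. apply (Pre_ext _ _ Pre_id). intro u. unfold bend. ring.
  - apply (Pre_ext _ _ (Pre_comp _ _ P IH)). intro u.
    rewrite bend_mult; auto. apply pow_lt; auto.
Qed.

Lemma Pre_bend_Z m : Pre (bend (powerRZ alpha m)).
Proof.
  assert (0 < / alpha) by (apply Rinv_0_lt_compat; lra).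
  destruct m; simpl.
  - apply (Pre_ext _ _ Pre_id). intro u. unfold bend. ring.
  - apply Pre_bend_pow. lra. apply Pre_bend_a.
  - rewrite <- pow_inv. apply Pre_bend_pow. auto. apply Pre_bend_ia.
Qed.

Lemma sorted_head t1 rest : strictly_sorted (t1 :: rest) ->
  forall j, (j < length rest)%nat -> t1 < nth j rest 0.
Proof.
  revert t1. induction rest as [|a rest IH]; intros t1 H j Hj.
  - simpl in Hj. lia.
  - simpl in H. destruct H as [H1 H2]. destruct j as [|j].
    + simpl. exact H1.
    + simpl. simpl in Hj. assert (a < nth j rest 0) by (apply IH; auto; lia). lra.
Qed.

Lemma sorted_tail t1 rest : strictly_sorted (t1 :: rest) -> strictly_sorted rest.
Proof. simpl. destruct rest; auto. tauto. Qed.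

Lemma main_ind (C : R) (t : list R) : forall g s c, PL_with g t s c ->
  (forall i, (i <= length t)%nat -> exists k, s i = C * powerRZ alpha k) -> NR g.
Proof.
  induction t as [|t1 rest IH]; intros g s c [Hsort Hg] Hs.
  - apply (NR_ext _ _ (NR_affine (s O) (c O))). intro x.
    symmetry. apply Hg; simpl; auto.
  - set (h := fun y => if Rle_dec y t1 then s 1%nat * y + c 1%nat else g y).
    assert (Hlen : length (t1 :: rest) = S (length rest)) by reflexivity.
    assert (G1 : forall x, t1 <= x -> (rest = nil \/ x <= nth 0 rest 0) ->
               g x = s 1%nat * x + c 1%nat).
    { intros x H1 H2. apply Hg.
      - rewrite Hlen. lia.
      - right. simpl. exact H1.
      - destruct H2 as [->|H2]. left. reflexivity. right. exact H2. }
    assert (G0 : forall x, x <= t1 -> g x = s 0%nat * x + c 0%nat).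
    { intros x H1. apply Hg. lia. left; auto. right. exact H1. }
    assert (Hr0 : rest = nil \/ t1 <= nth 0 rest 0).
    { destruct rest as [|a r]. left; auto. right.
      apply Rlt_le. apply (sorted_head t1 (a :: r) Hsort 0). simpl. lia. }
    assert (Hcont : s 0%nat * t1 + c 0%nat = s 1%nat * t1 + c 1%nat).
    { rewrite <- G0 by lra. apply G1; [lra|exact Hr0]. }
    assert (Hh : NR h).
    { apply (IH h (fun i => s (S i)) (fun i => c (S i))).
      - split. eapply sorted_tail; eauto.
        intros i x Hi H1 H2. unfold h. destruct (Rle_dec x t1) as [Hx|Hx].
        + destruct i as [|i]. reflexivity. destruct H1 as [H1|H1]. lia.
          exfalso. assert (t1 < nth (S i - 1) rest 0).
          { apply sorted_head; auto. lia. }    lra.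
        + apply Hg.
          * rewrite Hlen. lia.
          * right. destruct i as [|i].
            -- simpl. lra.
            -- destruct H1 as [H1|H1]. lia. simpl. simpl in H1.
               replace (i - 0)%nat with i in H1 by lia. exact H1.
          * destruct H2 as [H2|H2]. left. rewrite Hlen. lia. right. simpl. exact H2.
      - intros i Hi. apply Hs. rewrite Hlen. lia. }
    destruct (Hs 0%nat ltac:(lia)) as [k0 Hk0].
    destruct (Hs 1%nat ltac:(simpl; lia)) as [k1 Hk1].
    set (r := powerRZ alpha (k0 - k1)).
    assert (Hr : 0 < r) by (apply powerRZ_lt; lra).
    assert (Hs0 : s 0%nat = r * s 1%nat).
    { rewrite Hk0, Hk1. unfold r.
      replace k0 with ((k0 - k1) + k1)%Z at 1 by lia.
      rewrite powerRZ_add by lra. ring. }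
    assert (P : Pre (fun x => 1 * bend r (1 * x + - t1) + t1)).
    { apply (Pre_comp (fun y => 1 * y + t1) (fun x => bend r (1 * x + - t1))).
      apply Pre_affine.
      apply (Pre_comp (bend r) (fun x => 1 * x + - t1)).
      apply Pre_bend_Z. apply Pre_affine. }
    apply (NR_ext _ _ (P h Hh)). intro x. unfold h.
    destruct (Rle_dec t1 x) as [Hx|Hx].
    + rewrite bend_pos by lra.
      replace (1 * (1 * x + - t1) + t1) with x by ring.
      destruct (Rle_dec x t1) as [Hx'|Hx'].
      * symmetry. apply G1. lra. replace x with t1 by lra. exact Hr0.
      * reflexivity.
    + rewrite bend_neg by lra.
      destruct (Rle_dec (1 * (r * (1 * x + - t1)) + t1) t1) as [Hx'|Hx'].
      * rewrite (G0 x) by lra. rewrite Hs0. rewrite Hs0 in Hcont. nra.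
      * exfalso. apply Hx'. assert (x < t1) by lra. nra.
Qed.

End Aux.

Theorem mainTheorem4 (alpha : R) (Ha : 0 < alpha < 1) (g : R -> R) :
  alpha_power_PL alpha g ->
  exists (L : nat) (w b : nat -> R), forall x : R, g x = net alpha w b L x.
Proof.
  intros [t [s [c [HPL [C HC]]]]].
  exact (main_ind alpha Ha C t g s c HPL HC).
Qed.
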